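(* Let $(\Omega,\mathcal{F})$ be a measurable space, $\mathcal{P}$ a nonempty set of probability measures on $(\Omega,\mathcal{F})$, and $\hat{\mathbb{E}}[Z]=\sup_{P\in\mathcal{P}}E_P[Z]$. Let $X,Y$ be random variables with $\hat{\mathbb{E}}[X^2]+\hat{\mathbb{E}}[Y^2]<\infty$. Then (1) $\overline{C}(X,Y)=\sup_{P\in\mathrm{co}(\mathcal{P})}C_P(X,Y)$; (2) $\underline{C}(X,Y)=\inf_{P\in\mathrm{co}(\mathcal{P})}C_P(X,Y)$.
   Context: $\mathrm{co}(\mathcal{P})$ denotes the convex hull of $\mathcal{P}$ (finite convex combinations of elements of $\mathcal{P}$). For a random variable $Z$ with $\hat{\mathbb{E}}[Z^2]<\infty$: upper mean $\overline{\mu}_Z=\hat{\mathbb{E}}[Z]$, lower mean $\underline{\mu}_Z=-\hat{\mathbb{E}}[-Z]$, and $M_Z=[\underline{\mu}_Z,\overline{\mu}_Z]$. The upper covariance is $\overline{C}(X,Y)=\max_{\mu_2\in M_Y}\min_{\mu_1\in M_X}\hat{\mathbb{E}}[(X-\mu_1)(Y-\mu_2)]$ and the lower covariance is $\underline{C}(X,Y)=\min_{\mu_2\in M_Y}\max_{\mu_1\in M_X}\left(-\hat{\mathbb{E}}[-(X-\mu_1)(Y-\mu_2)]\right)$. For a probability measure $P$, $C_P(X,Y)=E_P[(X-E_P[X])(Y-E_P[Y])]$. *)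

(* Defs.v *)
From HB Require Import structures.
From mathcomp Require Import all_boot all_order all_algebra.
From mathcomp Require Import all_classical all_reals all_analysis.
Set Implicit Arguments. Unset Strict Implicit. Unset Printing Implicit Defensive.
Import Order.TTheory GRing.Theory Num.Theory.
Local Open Scope classical_set_scope.
Local Open Scope ring_scope.
Local Open Scope ereal_scope.

Section sublinear.
Context {d : measure_display} {T : measurableType d} {R : realType}.

Definition uexp (Pset : set (probability T R)) (Z : T -> R) : \bar R :=
  ereal_sup [set 'E_P[Z] | P in Pset].

Definition lexp (Pset : set (probability T R)) (Z : T -> R) : \bar R :=
  - uexp Pset (fun w => - Z w)%R.

Definition Mint (Pset : set (probability T R)) (Z : T -> R) : set R :=
  [set m : R | lexp Pset Z <= m%:E /\ m%:E <= uexp Pset Z].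

Definition upper_cov (Pset : set (probability T R)) (X Y : T -> R) : \bar R :=
  ereal_sup [set ereal_inf
     [set uexp Pset (fun w => (X w - m1) * (Y w - m2))%R | m1 in Mint Pset X]
   | m2 in Mint Pset Y].

Definition lower_cov (Pset : set (probability T R)) (X Y : T -> R) : \bar R :=
  ereal_inf [set ereal_sup
     [set - uexp Pset (fun w => - ((X w - m1) * (Y w - m2)))%R | m1 in Mint Pset X]
   | m2 in Mint Pset Y].

Definition conv_hull (Pset : set (probability T R)) : set (probability T R) :=
  [set Q | exists (n : nat) (w : 'I_n -> R) (Ps : 'I_n -> probability T R),
     [/\ (forall i, 0 <= w i)%R, (\sum_(i < n) w i = 1)%R,
         (forall i, Pset (Ps i)) &
         (forall A, measurable A -> Q A = \sum_(i < n) (w i)%:E * Ps i A)]].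

End sublinear.

(* Main.v *)
Require Import Defs.
From HB Require Import structures.
From mathcomp Require Import all_boot all_order all_algebra.
From mathcomp Require Import all_classical all_reals all_analysis.
From mathcomp Require Import ring lra measurable_realfun.
Set Implicit Arguments. Unset Strict Implicit. Unset Printing Implicit Defensive.
Import Order.TTheory GRing.Theory Num.Theory.
Local Open Scope classical_set_scope.
Local Open Scope ring_scope.

Section mix.
Context {d : measure_display} {T : measurableType d} {R : realType}.
Variables (P1 P2 : probability T R) (l : R) (hl0 : 0 <= l) (hl1 : l <= 1).
Let h1l : 0 <= 1 - l. Proof. by rewrite subr_ge0. Qed.
Definition mixP := measure_add (mscale (NngNum hl0) P1) (mscale (NngNum h1l) P2).
HB.instance Definition _ := Measure.on mixP.
Let mixP_setT : mixP setT = 1%E.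
Proof.
rewrite /mixP measure_addE /=. rewrite /mscale /=.
rewrite !probability_setT !mule1 -EFinD.
by rewrite addrC subrK.
Qed.
HB.instance Definition _ := Measure_isProbability.Build _ _ _ mixP mixP_setT.
Lemma mixPE A : mixP A = (l%:E * P1 A + (1 - l)%:E * P2 A)%E.
Proof. by rewrite /mixP measure_addE. Qed.
End mix.

Section mixint.
Context {d : measure_display} {T : measurableType d} {R : realType}.
Local Open Scope ereal_scope.

Lemma mix_int_ge0 (Q : probability T R) n (w : 'I_n -> R) (Ps : 'I_n -> probability T R) :
  (forall i, (0 <= w i)%R) ->
  (forall A, measurable A -> Q A = \sum_(i < n) (w i)%:E * Ps i A) ->
  forall f : T -> \bar R, measurable_fun setT f -> (forall x, 0 <= f x) ->
  \int[Q]_x f x = \sum_(i < n) (w i)%:E * \int[Ps i]_x f x.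
Proof.
move=> hw hQ f mf f0.
pose m_ : {measure set T -> \bar R}^nat := fun k =>
  match @insub nat (fun k => k < n)%N 'I_n k with
  | Some i => mscale (NngNum (hw i)) (Ps i)
  | None => mzero end.
rewrite (eq_measure_integral (msum m_ n)); last first.
  move=> A mA _; apply: (etrans (hQ A mA)); rewrite /msum /=; apply: eq_bigr => i _.
  rewrite /m_; case: insubP => [j _ /val_inj -> //|]; by rewrite ltn_ord.
rewrite ge0_integral_measure_sum //; apply: eq_bigr => i _.
rewrite /m_; case: insubP => [j _ /val_inj ->|]; last by rewrite ltn_ord.
by rewrite ge0_integral_mscale.
Qed.

Lemma mix_E (Q : probability T R) n (w : 'I_n -> R) (Ps : 'I_n -> probability T R) :
  (forall i, (0 <= w i)%R) ->
  (forall A, measurable A -> Q A = \sum_(i < n) (w i)%:E * Ps i A) ->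
  forall f : T -> R, measurable_fun setT f -> (forall i, f \in Lfun (Ps i) 1) ->
  f \in Lfun Q 1 /\ 'E_Q[f] = (\sum_(i < n) w i * fine 'E_(Ps i)[f])%:E.
Proof.
move=> hw hQ f mf hL.
have mF : measurable_fun setT (EFin \o f) by exact/measurable_EFinP.
have hi i : (Ps i).-integrable setT (EFin \o f) by apply/Lfun1_integrable.
split.
  apply/Lfun1_integrable; apply/integrableP; split => //.
  rewrite (mix_int_ge0 hw hQ (f := fun x => `|(f x)%:E|)) //; last first.
    exact: measurableT_comp.
  apply: lte_sum_pinfty => i _; apply: lte_mul_pinfty => //.
  by rewrite lee_fin. by have /integrableP[_] := hi i.
rewrite unlock integralE.
have mP := measurable_funepos mF; have mN := measurable_funeneg mF.
rewrite (mix_int_ge0 hw hQ mP (@funepos_ge0 _ _ _)).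
rewrite (mix_int_ge0 hw hQ mN (@funeneg_ge0 _ _ _)).
pose p i := fine (\int[Ps i]_x (EFin \o f)^\+ x).
pose q i := fine (\int[Ps i]_x (EFin \o f)^\- x).
have ep i : \int[Ps i]_x (EFin \o f)^\+ x = (p i)%:E.
  by rewrite /p fineK //; exact: (integrable_pos_fin_num measurableT (hi i)).
have eq i : \int[Ps i]_x (EFin \o f)^\- x = (q i)%:E.
  by rewrite /q fineK //; exact: (integrable_neg_fin_num measurableT (hi i)).
rewrite (eq_bigr (fun i => (w i * p i)%:E)); last by move=> i _; rewrite ep.
rewrite [X in _ - X](eq_bigr (fun i => (w i * q i)%:E)); last by move=> i _; rewrite eq.
rewrite !sumEFin -EFinB -sumrB; congr (_%:E); apply: eq_bigr => i _.
rewrite -mulrBr; congr (_ * _)%R.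
by rewrite integralE ep eq.
Qed.

End mixint.

Section moments.
Context {d : measure_display} {T : measurableType d} {R : realType}.
Variable P : probability T R.
Local Open Scope ereal_scope.

Lemma Lfun_aff (U V : T -> R) (m1 m2 : R) :
  U \in Lfun P 1 -> V \in Lfun P 1 -> (fun w => U w * V w)%R \in Lfun P 1 ->
  (fun w => (U w - m1) * (V w - m2))%R \in Lfun P 1 /\
  'E_P[fun w => (U w - m1) * (V w - m2)]%R =
    (fine 'E_P[fun w => U w * V w]%R - m1 * fine 'E_P[V] - m2 * fine 'E_P[U] + m1 * m2)%:E.
Proof.
move=> LU LV LUV.
have -> : (fun w => (U w - m1) * (V w - m2))%R =
  (((fun w => U w * V w) \+ (- m1) \o* V) \+ ((- m2) \o* U \+ cst (m1 * m2)))%R.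
  by apply/funext => w /=; ring.
have LV' : ((- m1) \o* V)%R \in Lfun P 1 by exact: Lfun_scale.
have LU' : ((- m2) \o* U)%R \in Lfun P 1 by exact: Lfun_scale.
have Lc : (cst (m1 * m2))%R \in Lfun P 1 by exact: Lfun_cst.
split; first by rewrite !rpredD.
rewrite !expectationD ?rpredD // expectation_cst !expectationZl //.
rewrite -[X in X + _ + _](fineK (expectation_fin_num LUV)).
rewrite -[X in _ + _ * X + _](fineK (expectation_fin_num LV)).
rewrite -[X in _ + (_ * X + _)](fineK (expectation_fin_num LU)).
rewrite -!EFinM -!EFinD; congr (_%:E); ring.
Qed.

End moments.
Section abstract.
Context {R : realType} {I : Type}.
Variables (S H : set I) (a b c : I -> R).
Hypothesis S0 : S !=set0.
Hypothesis Hbd : exists K : R, forall s, S s -> a s ^+ 2 <= K /\ b s ^+ 2 <= K.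
Hypothesis Hh : forall h, H h -> forall al be ga : R,
  exists2 s, S s & al * a h + be * b h + ga * c h <= al * a s + be * b s + ga * c s.
Hypothesis Hmix : forall s1 s2, S s1 -> S s2 -> forall l : R, 0 <= l -> l <= 1 ->
  exists2 h, H h & [/\ a h = l * a s1 + (1 - l) * a s2,
                      b h = l * b s1 + (1 - l) * b s2 &
                      c h = l * c s1 + (1 - l) * c s2].

Local Open Scope ereal_scope.

Let Ap := ereal_sup [set (a s)%:E | s in S].
Let Am := ereal_inf [set (a s)%:E | s in S].
Let Bp := ereal_sup [set (b s)%:E | s in S].
Let Bm := ereal_inf [set (b s)%:E | s in S].

Lemma sq_bound (x K : R) : (x ^+ 2 <= K)%R -> (`|x| <= 1 + K)%R.
Proof.
move=> h; have h2 : (`|x| ^+ 2 = x ^+ 2)%R by rewrite real_normK ?num_real.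
have := normr_ge0 x; nra.
Qed.

Let Am_le s : S s -> Am <= (a s)%:E.
Proof. by move=> Ss; apply: ereal_inf_lbound; exists s. Qed.
Let Ap_ge s : S s -> (a s)%:E <= Ap.
Proof. by move=> Ss; apply: ereal_sup_ubound; exists s. Qed.

Let Ap_fin : Ap \is a fin_num.
Proof.
case: Hbd => K HK; case: S0 => s0 Ss0.
rewrite fin_numElt; apply/andP; split.
  by apply: (lt_le_trans _ (Ap_ge Ss0)); rewrite ltNyr.
apply: (le_lt_trans (y := (1 + K)%:E)); last by rewrite ltry.
apply: ge_ereal_sup => _ [s Ss <-]; rewrite lee_fin.
have := sq_bound (proj1 (HK s Ss)); rewrite ler_norml => /andP[_ //].
Qed.

Let Am_fin : Am \is a fin_num.
Proof.
case: Hbd => K HK; case: S0 => s0 Ss0.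
rewrite fin_numElt; apply/andP; split; last first.
  by apply: (le_lt_trans (Am_le Ss0)); rewrite ltry.
apply: (lt_le_trans (y := (- (1 + K))%:E)); first by rewrite ltNyr.
apply: le_ereal_inf_tmp => _ [s Ss <-]; rewrite lee_fin.
have := sq_bound (proj1 (HK s Ss)); rewrite ler_norml => /andP[+ _] //.
Qed.

Definition Mset (lo hi : \bar R) := [set m : R | lo <= m%:E /\ m%:E <= hi].

Lemma upper_main :
  ereal_sup [set ereal_inf [set ereal_sup [set (c s - m1 * b s - m2 * a s + m1 * m2)%:E
     | s in S] | m1 in Mset (ereal_inf [set (a s)%:E | s in S]) (ereal_sup [set (a s)%:E | s in S])]
     | m2 in Mset (ereal_inf [set (b s)%:E | s in S]) (ereal_sup [set (b s)%:E | s in S])]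
  = ereal_sup [set (c h - a h * b h)%:E | h in H].
Proof.
rewrite -/Am -/Ap -/Bm -/Bp.
apply/eqP; rewrite eq_le; apply/andP; split; last first.
  apply: ge_ereal_sup => _ [h Hh0 <-].
  apply: le_ereal_sup_tmp; exists (ereal_inf [set ereal_sup
    [set (c s - m1 * b s - b h * a s + m1 * b h)%:E | s in S] | m1 in Mset Am Ap]).
    exists (b h) => //; split.
      have [s Ss hs] := Hh Hh0 0 (-1) 0.
      apply: (le_trans (ereal_inf_lbound _)); first by exists s.
      by rewrite lee_fin; lra.
    have [s Ss hs] := Hh Hh0 0 1 0.
    apply: (le_trans _ (ereal_sup_ubound _)); last by exists s.
    by rewrite lee_fin; lra.
  apply: le_ereal_inf_tmp => _ [m1 _ <-].
  have [s Ss hs] := Hh Hh0 (- b h) (- m1) 1.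
  apply: (le_trans _ (ereal_sup_ubound _)); last by exists s.
  by rewrite lee_fin; lra.
set V := ereal_sup [set (c h - a h * b h)%:E | h in H].
have [s0 Ss0] := S0.
have [h0 Hh0 _] := Hmix Ss0 Ss0 (@ler01 R) (lexx 1%R).
have VC h : H h -> (c h - a h * b h)%:E <= V.
  by move=> Hh0'; apply: ereal_sup_ubound; exists h.
have VV : (exists v, V = v%:E) \/ V = +oo \/ V = -oo.
  by case: (V) => [v||]; [left; exists v|right; left|right; right].
case: VV => [[v Vv]|[Vy|Vny]]; last 2 first.
- by rewrite Vy leey.
- by have := VC _ Hh0; rewrite Vny leeNy_eq.
rewrite Vv.
have Cv h : H h -> (c h - a h * b h <= v)%R by move=> /VC; rewrite Vv lee_fin.
have Cs s : S s -> (c s - a s * b s <= v)%R.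
  move=> Ss; have [h Hh1 [ah bh ch]] := Hmix Ss Ss (@ler01 R) (lexx 1%R).
  by have := Cv _ Hh1; rewrite ah bh ch subrr !mul0r !addr0 !mul1r.
apply: ge_ereal_sup => _ [m2 _ <-].
pose g s := (c s - m2 * a s)%R.
pose be s := (b s - m2)%R.
pose r s := ((g s - v) / be s)%R.
have rbe s : be s != 0%R -> (r s * be s = g s - v)%R.
  by move=> h; rewrite /r divfK.
have pair s1 s2 : S s1 -> S s2 -> (0 < be s1)%R -> (be s2 < 0)%R -> (r s1 <= r s2)%R.
  move=> S1 S2 p1 n2.
  pose l := (- be s2 / (be s1 - be s2))%R.
  have d0 : (0 < be s1 - be s2)%R by lra.
  have l0 : (0 <= l)%R by rewrite /l divr_ge0 //; lra.
  have l1 : (l <= 1)%R by rewrite /l ler_pdivrMr //; lra.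
  have hl : (l * (be s1 - be s2) = - be s2)%R by rewrite /l divfK // gt_eqF.
  have [h Hh1 [ah bh ch]] := Hmix S1 S2 l0 l1.
  have := Cv _ Hh1; rewrite ah bh ch => hv.
  have e1 := rbe s1 (lt0r_neq0 p1); have e2 := rbe s2 (ltr0_neq0 n2).
  have bh' : (l * b s1 + (1 - l) * b s2 = m2)%R.
    by move: hl; rewrite /be; lra.
  rewrite bh' in hv.
  have hv1 : (l * (g s1 - v) + (1 - l) * (g s2 - v) <= 0)%R.
    by rewrite /g; lra.
  rewrite -e1 -e2 in hv1.
  have hv2 : (be s1 * be s2 * (r s2 - r s1) <= 0)%R.
    have := ler_wpM2r (ltW d0) hv1; rewrite mul0r.
    have -> : ((l * (r s1 * be s1) + (1 - l) * (r s2 * be s2)) * (be s1 - be s2)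
      = (l * (be s1 - be s2)) * (r s1 * be s1) + ((be s1 - be s2) - l * (be s1 - be s2)) * (r s2 * be s2))%R.
      by ring.
    rewrite hl => hh; apply: (le_trans _ hh); rewrite le_eqVlt; apply/orP; left; apply/eqP; ring.
  have hn : (be s1 * be s2 < 0)%R by rewrite pmulr_rlt0.
  by move: hv2; rewrite nmulr_rle0 // subr_ge0.
have ra s : S s -> (0 < be s)%R -> (r s <= a s)%R.
  move=> Ss hb; have e := rbe s (lt0r_neq0 hb); have := Cs s Ss.
  move: e hb; rewrite /g /be => e hb hc.
  have : ((r s - a s) * (b s - m2) <= 0)%R by lra.
  by rewrite pmulr_lle0 // subr_le0.
have ar s : S s -> (be s < 0)%R -> (a s <= r s)%R.
  move=> Ss hb; have e := rbe s (ltr0_neq0 hb); have := Cs s Ss.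
  move: e hb; rewrite /g /be => e hb hc.
  have : ((r s - a s) * (b s - m2) <= 0)%R by lra.
  by rewrite nmulr_lle0 // subr_ge0.
pose E := [set x : \bar R | x = Am \/ exists2 s, S s & (0 < be s)%R /\ x = (r s)%:E].
pose Tp := ereal_sup E.
have AmTp : Am <= Tp by apply: ereal_sup_ubound; left.
have AmAp : Am <= Ap by apply: (le_trans (Am_le Ss0)); exact: Ap_ge.
have TpAp : Tp <= Ap.
  apply: ge_ereal_sup => x [->//|[s Ss [bp ->]]].
  by apply: (le_trans _ (Ap_ge Ss)); rewrite lee_fin; exact: ra.
have Tpfin : Tp \is a fin_num.
  move: Am_fin Ap_fin; rewrite !fin_numElt => /andP[h1 _] /andP[_ h2].
  by rewrite (lt_le_trans h1 AmTp) (le_lt_trans TpAp h2).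
pose t := fine Tp.
have tE : t%:E = Tp by rewrite fineK.
have rt s : S s -> (0 < be s)%R -> (r s <= t)%R.
  by move=> Ss hb; rewrite -lee_fin tE; apply: ereal_sup_ubound; right; exists s.
have tr s : S s -> (be s < 0)%R -> (t <= r s)%R.
  move=> Ss hb; rewrite -lee_fin tE; apply: ge_ereal_sup => x [->|[s' Ss' [bp ->]]].
    by apply: (le_trans (Am_le Ss)); rewrite lee_fin; exact: ar.
  by rewrite lee_fin; exact: pair.
apply: ge_ereal_inf.
exists (ereal_sup [set (c s - t * b s - m2 * a s + t * m2)%:E | s in S]).
  by exists t => //; split; rewrite tE.
apply: ge_ereal_sup => _ [s Ss <-]; rewrite lee_fin.
case: (ltgtP (be s) 0%R) => hb.
- have e := rbe s (ltr0_neq0 hb); have := tr s Ss hb.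
  move: e hb; rewrite /g /be => e hb hc.
  have : ((r s - t) * (b s - m2) <= 0)%R.
    by apply: mulr_ge0_le0; lra.
  lra.
- have e := rbe s (lt0r_neq0 hb); have := rt s Ss hb.
  move: e hb; rewrite /g /be => e hb hc.
  have : ((r s - t) * (b s - m2) <= 0)%R by apply: mulr_le0_ge0; lra.
  lra.
- have := Cs s Ss; move: hb; rewrite /be => /eqP; rewrite subr_eq0 => /eqP hb.
  rewrite hb; lra.
Qed.

End abstract.

Section abstract2.
Local Open Scope ereal_scope.
Context {R : realType} {I : Type}.

Lemma imgN (J : Type) (A : set J) (f : J -> R) :
  -%E @` [set (f s)%:E | s in A] = [set (- f s)%:E | s in A].
Proof. by rewrite image_comp. Qed.

Lemma lower_main (S H : set I) (a b c : I -> R) :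
  S !=set0 ->
  (exists K : R, forall s, S s -> (a s ^+ 2 <= K)%R /\ (b s ^+ 2 <= K)%R) ->
  (forall h, H h -> forall al be ga : R,
    exists2 s, S s & (al * a h + be * b h + ga * c h <= al * a s + be * b s + ga * c s)%R) ->
  (forall s1 s2, S s1 -> S s2 -> forall l : R, (0 <= l)%R -> (l <= 1)%R ->
    exists2 h, H h & [/\ a h = (l * a s1 + (1 - l) * a s2)%R,
                      b h = (l * b s1 + (1 - l) * b s2)%R &
                      c h = (l * c s1 + (1 - l) * c s2)%R]) ->
  ereal_inf [set ereal_sup [set - ereal_sup [set (- (c s - m1 * b s - m2 * a s + m1 * m2))%:E
     | s in S] | m1 in Mset (ereal_inf [set (a s)%:E | s in S]) (ereal_sup [set (a s)%:E | s in S])]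
     | m2 in Mset (ereal_inf [set (b s)%:E | s in S]) (ereal_sup [set (b s)%:E | s in S])]
  = ereal_inf [set (c h - a h * b h)%:E | h in H].
Proof.
move=> S0 [K HK] Hh Hmix.
have H1 : exists K : R, forall s, S s -> ((- a s) ^+ 2 <= K)%R /\ (b s ^+ 2 <= K)%R.
  by exists K => s Ss; rewrite sqrrN; exact: HK.
have H2 : forall h, H h -> forall al be ga : R,
    exists2 s, S s & (al * (- a h) + be * b h + ga * (- c h) <= al * (- a s) + be * b s + ga * (- c s))%R.
  move=> h Hh0 al be ga; have [s Ss hs] := Hh h Hh0 (- al)%R be (- ga)%R.
  by exists s => //; lra.
have H3 : forall s1 s2, S s1 -> S s2 -> forall l : R, (0 <= l)%R -> (l <= 1)%R ->
    exists2 h, H h & [/\ (- a h = l * (- a s1) + (1 - l) * (- a s2))%R,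
                      b h = (l * b s1 + (1 - l) * b s2)%R &
                      (- c h = l * (- c s1) + (1 - l) * (- c s2))%R].
  move=> s1 s2 S1 S2 l l0 l1; have [h Hh0 [ah bh ch]] := Hmix s1 s2 S1 S2 l l0 l1.
  by exists h => //; split => //; rewrite ?ah ?ch; lra.
have U := @upper_main R I S H (fun s => - a s)%R b (fun s => - c s)%R S0 H1 H2 H3.
set Ma := Mset _ _.
have infNa : ereal_inf [set (- a s)%:E | s in S] = - ereal_sup [set (a s)%:E | s in S].
  by rewrite -imgN ereal_infN.
have supNa : ereal_sup [set (- a s)%:E | s in S] = - ereal_inf [set (a s)%:E | s in S].
  by rewrite -imgN ereal_supN.
rewrite infNa supNa in U.
rewrite ereal_infEN [in RHS]ereal_infEN; congr (- _).
rewrite [in RHS]imgN.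
have -> : [set (- (c h - a h * b h))%:E | h in H] = [set (- c h - - a h * b h)%:E | h in H].
  by apply: eq_imagel => h _; congr (_%:E); ring.
rewrite -U image_comp /=; congr ereal_sup.
apply: eq_imagel => m2 _ /=.
rewrite -[in LHS]ereal_infN [in LHS]image_comp /=; congr ereal_inf.
rewrite eqEsubset; split => _ [m1 hm1 <-].
- exists (- m1)%R.
    move: hm1; rewrite /Ma /Mset /= => -[h1 h2]; split.
      by rewrite EFinN leeN2.
    by rewrite EFinN leeN2.
  rewrite /= oppeK; congr ereal_sup; apply: eq_imagel => s _; congr (_%:E); ring.
- exists (- m1)%R.
    move: hm1; rewrite /Ma /Mset /= => -[h1 h2]; split.
      by rewrite EFinN -leeN2 oppeK.
    by rewrite EFinN -leeN2 oppeK.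
  rewrite /= oppeK; congr ereal_sup; apply: eq_imagel => s _; congr (_%:E); ring.
Qed.

End abstract2.
Lemma convex_le_max {R : realType} n (w : 'I_n -> R) (phi : 'I_n -> R) :
  (forall i, 0 <= w i) -> \sum_(i < n) w i = 1 ->
  exists i, \sum_(i < n) w i * phi i <= phi i.
Proof.
move=> w0 w1; case: n w phi w0 w1 => [|n] w phi w0 w1.
  by move: w1; rewrite big_ord0 => /eqP; rewrite eq_sym oner_eq0.
case: (@arg_maxP _ _ _ (@ord0 n) predT phi erefl) => i _ Hi.
exists i; apply: (le_trans (y := \sum_(j < n.+1) w j * phi i)).
  by apply: ler_sum => j _; apply: ler_wpM2l => //; exact: Hi.
by rewrite -mulr_suml w1 mul1r.
Qed.

Section main.
Context {d : measure_display} {T : measurableType d} {R : realType}.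
Variables (X Y : T -> R).
Hypotheses (mX : measurable_fun setT X) (mY : measurable_fun setT Y).
Local Open Scope ereal_scope.

Definition good (P : probability T R) :=
  [/\ X \in Lfun P 1, Y \in Lfun P 1, (fun w => X w * Y w)%R \in Lfun P 1,
      (fun w => X w * X w)%R \in Lfun P 1 & (fun w => Y w * Y w)%R \in Lfun P 1].

Definition ma (P : probability T R) := fine 'E_P[X].
Definition mb (P : probability T R) := fine 'E_P[Y].
Definition mc (P : probability T R) := fine 'E_P[fun w => X w * Y w]%R.
Definition mxx (P : probability T R) := fine 'E_P[fun w => X w * X w]%R.
Definition myy (P : probability T R) := fine 'E_P[fun w => Y w * Y w]%R.

Lemma good_aff P m1 m2 : good P ->
  'E_P[fun w => (X w - m1) * (Y w - m2)]%R = (mc P - m1 * mb P - m2 * ma P + m1 * m2)%:E.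
Proof. by case=> LX LY LXY _ _; have [_ ->] := Lfun_aff m1 m2 LX LY LXY. Qed.

Lemma good_affN P m1 m2 : good P ->
  'E_P[fun w => - ((X w - m1) * (Y w - m2))]%R = (- (mc P - m1 * mb P - m2 * ma P + m1 * m2))%:E.
Proof.
case=> LX LY LXY _ _; have [L E] := Lfun_aff m1 m2 LX LY LXY.
have -> : (fun w => - ((X w - m1) * (Y w - m2)))%R = ((-1) \o* (fun w => (X w - m1) * (Y w - m2)))%R.
  by apply/funext => w /=; rewrite mulrN1.
by rewrite expectationZl // E -EFinM mulN1r.
Qed.

Lemma good_X P : good P -> 'E_P[X] = (ma P)%:E.
Proof. by case=> LX _ _ _ _; rewrite /ma fineK // expectation_fin_num. Qed.

Lemma good_Y P : good P -> 'E_P[Y] = (mb P)%:E.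
Proof. by case=> _ LY _ _ _; rewrite /mb fineK // expectation_fin_num. Qed.

Lemma good_NX P : good P -> 'E_P[fun w => - X w]%R = (- ma P)%:E.
Proof.
move=> g; have := g; case=> LX _ _ _ _.
have -> : (fun w => - X w)%R = ((-1) \o* X)%R by apply/funext => w /=; rewrite mulrN1.
by rewrite expectationZl // good_X // -EFinM mulN1r.
Qed.

Lemma good_NY P : good P -> 'E_P[fun w => - Y w]%R = (- mb P)%:E.
Proof.
move=> g; have := g; case=> _ LY _ _ _.
have -> : (fun w => - Y w)%R = ((-1) \o* Y)%R by apply/funext => w /=; rewrite mulrN1.
by rewrite expectationZl // good_Y // -EFinM mulN1r.
Qed.

Lemma good_cov P : good P -> covariance P X Y = (mc P - ma P * mb P)%:E.
Proof.
move=> g; have := g; case=> LX LY LXY _ _.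
rewrite covarianceE //; rewrite good_X // good_Y //.
have -> : (X * Y)%R = (fun w => X w * Y w)%R by []. have eC : 'E_P[fun w => X w * Y w]%R = (mc P)%:E by rewrite /mc fineK // expectation_fin_num. by rewrite eC -EFinM -EFinB.
Qed.

Lemma good_sqX P : good P -> (ma P ^+ 2 <= mxx P)%R.
Proof.
case=> LX _ _ LXX _; have [_ E] := Lfun_aff (ma P) (ma P) LX LX LXX.
have : 0 <= 'E_P[fun w => (X w - ma P) * (X w - ma P)]%R.
  by apply: expectation_ge0 => w; rewrite -expr2 sqr_ge0.
by rewrite E lee_fin -/(ma P) -/(mxx P); nra.
Qed.

Lemma good_sqY P : good P -> (mb P ^+ 2 <= myy P)%R.
Proof.
case=> _ LY _ _ LYY; have [_ E] := Lfun_aff (mb P) (mb P) LY LY LYY.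
have : 0 <= 'E_P[fun w => (Y w - mb P) * (Y w - mb P)]%R.
  by apply: expectation_ge0 => w; rewrite -expr2 sqr_ge0.
by rewrite E lee_fin -/(mb P) -/(myy P); nra.
Qed.

End main.

Section bounds.
Context {d : measure_display} {T : measurableType d} {R : realType}.
Local Open Scope ereal_scope.

Lemma Lfun_of_bound (P : probability T R) (f g : T -> R) :
  measurable_fun setT f -> measurable_fun setT g ->
  (forall x, `|f x| <= g x)%R -> 'E_P[g] < +oo -> f \in Lfun P 1.
Proof.
move=> mf mg fg Eg; apply/Lfun1_integrable; apply/integrableP; split.
  exact/measurable_EFinP.
apply: (le_lt_trans _ Eg); rewrite unlock; apply: ge0_le_integral => //.
- by apply: measurableT_comp => //; exact/measurable_EFinP.
- exact/measurable_EFinP.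
- by move=> x _ /=; rewrite lee_fin.
Qed.

Lemma abs_le1 (x y : R) : (`|x| <= 1 + x ^+ 2 + y ^+ 2)%R.
Proof.
rewrite -[(x ^+ 2)%R]real_normK ?num_real // -[(y ^+ 2)%R]real_normK ?num_real //.
have := normr_ge0 x; have := normr_ge0 y; nra.
Qed.

Lemma abs_le2 (x y : R) : (`|x * y| <= 1 + x ^+ 2 + y ^+ 2)%R.
Proof.
rewrite normrM -[(x ^+ 2)%R]real_normK ?num_real // -[(y ^+ 2)%R]real_normK ?num_real //.
have := normr_ge0 x; have := normr_ge0 y; nra.
Qed.

End bounds.

Section final.
Context {d : measure_display} {T : measurableType d} {R : realType}.
Variables (Pset : set (probability T R)) (X Y : T -> R).
Hypotheses (mX : measurable_fun setT X) (mY : measurable_fun setT Y).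
Local Open Scope ereal_scope.
Hypothesis Hfin : uexp Pset (fun w => X w ^+ 2)%R + uexp Pset (fun w => Y w ^+ 2)%R < +oo.

Let uX := uexp Pset (fun w => X w ^+ 2)%R.
Let uY := uexp Pset (fun w => Y w ^+ 2)%R.

Lemma absb1 (x y : R) : (`|y| <= 1 + x ^+ 2 + y ^+ 2)%R.
Proof. by rewrite -addrA [(x ^+ 2 + _)%R]addrC addrA abs_le1. Qed.
Lemma absb2 (x y : R) : (`|x * x| <= 1 + x ^+ 2 + y ^+ 2)%R.
Proof. rewrite normrM -expr2 real_normK ?num_real //; have := sqr_ge0 y; lra. Qed.
Lemma absb3 (x y : R) : (`|y * y| <= 1 + x ^+ 2 + y ^+ 2)%R.
Proof. rewrite normrM -expr2 real_normK ?num_real //; have := sqr_ge0 x; lra. Qed.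

Lemma good_Pset P : Pset P ->
  [/\ good X Y P, (mxx X P <= fine uX)%R, (myy Y P <= fine uY)%R & (0 <= fine uY)%R].
Proof.
move=> HP.
have eX : 'E_P[fun w => X w ^+ 2]%R <= uX by apply: ereal_sup_ubound; exists P.
have eY : 'E_P[fun w => Y w ^+ 2]%R <= uY by apply: ereal_sup_ubound; exists P.
have uY0 : 0 <= uY.
  by apply: le_trans eY; apply: expectation_ge0 => w; exact: sqr_ge0.
have uX0 : 0 <= uX.
  by apply: le_trans eX; apply: expectation_ge0 => w; exact: sqr_ge0.
have uXf : uX < +oo by apply: le_lt_trans Hfin; exact: leeDl.
have uYf : uY < +oo by apply: le_lt_trans Hfin; exact: leeDr.
have mX2 : measurable_fun setT (fun w => X w ^+ 2)%R by exact: measurable_funX.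
have mY2 : measurable_fun setT (fun w => Y w ^+ 2)%R by exact: measurable_funX.
have LX2 : (fun w => X w ^+ 2)%R \in Lfun P 1.
  apply: (Lfun_of_bound mX2 mX2) => [x|]; first by rewrite ger0_norm ?sqr_ge0.
  exact: le_lt_trans eX uXf.
have LY2 : (fun w => Y w ^+ 2)%R \in Lfun P 1.
  apply: (Lfun_of_bound mY2 mY2) => [x|]; first by rewrite ger0_norm ?sqr_ge0.
  exact: le_lt_trans eY uYf.
pose g := (fun w => 1 + X w ^+ 2 + Y w ^+ 2)%R.
have mg : measurable_fun setT g.
  by apply: measurable_funD => //; apply: measurable_funD.
have Eg : 'E_P[g] < +oo.
  have -> : g = ((cst 1 \+ (fun w => X w ^+ 2)) \+ (fun w => Y w ^+ 2))%R by [].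
  rewrite !expectationD ?rpredD ?Lfun_cst // expectation_cst.
  apply: lte_add_pinfty; last by apply: le_lt_trans eY uYf.
  by apply: lte_add_pinfty; [rewrite ltry|apply: le_lt_trans eX uXf].
have LXX : (fun w => X w * X w)%R \in Lfun P 1.
  by apply: (Lfun_of_bound _ mg _ Eg) => [|x]; [exact: measurable_funM|exact: absb2].
have LYY : (fun w => Y w * Y w)%R \in Lfun P 1.
  by apply: (Lfun_of_bound _ mg _ Eg) => [|x]; [exact: measurable_funM|exact: absb3].
split.
- split => //.
  + by apply: (Lfun_of_bound mX mg _ Eg) => x; exact: abs_le1.
  + by apply: (Lfun_of_bound mY mg _ Eg) => x; exact: absb1.
  + by apply: (Lfun_of_bound _ mg _ Eg) => [|x]; [exact: measurable_funM|exact: abs_le2].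
- rewrite /mxx; apply: fine_le.
  + by rewrite expectation_fin_num.
  + by rewrite ge0_fin_numE.
  + by apply: le_trans eX; rewrite le_eqVlt; apply/orP; left; apply/eqP; congr expectation; apply/funext => w; rewrite expr2.
- rewrite /myy; apply: fine_le.
  + by rewrite expectation_fin_num.
  + by rewrite ge0_fin_numE.
  + by apply: le_trans eY; rewrite le_eqVlt; apply/orP; left; apply/eqP; congr expectation; apply/funext => w; rewrite expr2.
- exact: fine_ge0.
Qed.

Lemma conv_mom (Q : probability T R) n (w : 'I_n -> R) (Ps : 'I_n -> probability T R) :
  (forall i, (0 <= w i)%R) -> (forall i, Pset (Ps i)) ->
  (forall A, measurable A -> Q A = \sum_(i < n) (w i)%:E * Ps i A) ->
  [/\ good X Y Q, ma X Q = (\sum_(i < n) w i * ma X (Ps i))%R,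
      mb Y Q = (\sum_(i < n) w i * mb Y (Ps i))%R &
      mc X Y Q = (\sum_(i < n) w i * mc X Y (Ps i))%R].
Proof.
move=> w0 HPs HQ.
have g i : good X Y (Ps i) by have [] := good_Pset (HPs i).
have [LX EX] := mix_E w0 HQ mX (fun i => let: And5 h _ _ _ _ := g i in h).
have [LY EY] := mix_E w0 HQ mY (fun i => let: And5 _ h _ _ _ := g i in h).
have [LXY EXY] := mix_E w0 HQ (measurable_funM mX mY) (fun i => let: And5 _ _ h _ _ := g i in h).
have [LXX _] := mix_E w0 HQ (measurable_funM mX mX) (fun i => let: And5 _ _ _ h _ := g i in h).
have [LYY _] := mix_E w0 HQ (measurable_funM mY mY) (fun i => let: And5 _ _ _ _ h := g i in h).
by split; [split|rewrite /ma EX|rewrite /mb EY|rewrite /mc EXY].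
Qed.

Lemma conv_Hh Q : conv_hull Pset Q -> forall al be ga : R,
  exists2 P, Pset P & (al * ma X Q + be * mb Y Q + ga * mc X Y Q <=
                       al * ma X P + be * mb Y P + ga * mc X Y P)%R.
Proof.
case=> n [w [Ps [w0 w1 HPs HQ]]] al be ga.
have [_ -> -> ->] := conv_mom w0 HPs HQ.
have [i hi] := convex_le_max
  (fun i => al * ma X (Ps i) + be * mb Y (Ps i) + ga * mc X Y (Ps i))%R w0 w1.
exists (Ps i) => //; apply: le_trans hi.
rewrite !mulr_sumr -!big_split /=; rewrite le_eqVlt; apply/orP; left; apply/eqP; apply: eq_bigr => j _; ring.
Qed.

Lemma conv_mix P1 P2 : Pset P1 -> Pset P2 -> forall l : R, (0 <= l)%R -> (l <= 1)%R ->
  exists2 Q, conv_hull Pset Q &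
    [/\ ma X Q = (l * ma X P1 + (1 - l) * ma X P2)%R,
        mb Y Q = (l * mb Y P1 + (1 - l) * mb Y P2)%R &
        mc X Y Q = (l * mc X Y P1 + (1 - l) * mc X Y P2)%R].
Proof.
move=> H1 H2 l l0 l1.
pose w := fun i : 'I_2 => if val i == 0%N then l else (1 - l)%R.
pose Ps := fun i : 'I_2 => if val i == 0%N then P1 else P2.
have w0 i : (0 <= w i)%R by rewrite /w; case: ifP => _ //; rewrite subr_ge0.
have HPs i : Pset (Ps i) by rewrite /Ps; case: ifP.
have HQ A : measurable A -> mixP P1 P2 l0 l1 A = \sum_(i < 2) (w i)%:E * Ps i A.
  by move=> _; rewrite mixPE !big_ord_recl big_ord0 /= adde0.
have w1 : (\sum_(i < 2) w i = 1)%R by rewrite !big_ord_recl big_ord0 /= addr0 addrC subrK.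
exists (mixP P1 P2 l0 l1).
  by exists 2%N, w, Ps; split.
have [_ -> -> ->] := conv_mom w0 HPs HQ.
by rewrite !big_ord_recl !big_ord0 /= !addr0.
Qed.

End final.

Unset Implicit Arguments.
Local Open Scope classical_set_scope.
Local Open Scope ring_scope.
Local Open Scope ereal_scope.

Theorem theorem3p5 (d : measure_display) (T : measurableType d) (R : realType)
  (Pset : set (probability T R)) (X Y : T -> R) :
  Pset !=set0 ->
  measurable_fun setT X -> measurable_fun setT Y ->
  uexp Pset (fun w => X w ^+ 2)%R + uexp Pset (fun w => Y w ^+ 2)%R < +oo ->
  upper_cov Pset X Y = ereal_sup [set covariance Q X Y | Q in conv_hull Pset] /\
  lower_cov Pset X Y = ereal_inf [set covariance Q X Y | Q in conv_hull Pset].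
Proof.
move=> S0 mX mY Hfin.
have gP P : Pset P -> good X Y P by move=> HP; have [] := good_Pset mX mY Hfin HP.
have gQ Q : conv_hull Pset Q -> good X Y Q.
  by case=> n [w [Ps [w0 w1 HPs HQ]]]; have [] := conv_mom mX mY Hfin w0 HPs HQ.
have Hbd : exists K : R, forall s, Pset s -> (ma X s ^+ 2 <= K)%R /\ (mb Y s ^+ 2 <= K)%R.
  exists (fine (uexp Pset (fun w => X w ^+ 2)%R) + fine (uexp Pset (fun w => Y w ^+ 2)%R))%R.
  move=> s Hs; have [g hx hy hy0] := good_Pset mX mY Hfin Hs.
  have h1 := good_sqX g; have h2 := good_sqY g.
  have := sqr_ge0 (ma X s); have := sqr_ge0 (mb Y s).
  by split; lra.
have Hh := conv_Hh mX mY Hfin.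
have Hmix := conv_mix mX mY Hfin.
have hUX : uexp Pset X = ereal_sup [set (ma X s)%:E | s in Pset].
  by rewrite /uexp; congr ereal_sup; apply: eq_imagel => P HP; exact: good_X (gP P HP).
have hUY : uexp Pset Y = ereal_sup [set (mb Y s)%:E | s in Pset].
  by rewrite /uexp; congr ereal_sup; apply: eq_imagel => P HP; exact: good_Y (gP P HP).
have hLX : lexp Pset X = ereal_inf [set (ma X s)%:E | s in Pset].
  rewrite /lexp /uexp ereal_infEN imgN; congr (- ereal_sup _).
  by apply: eq_imagel => P HP; exact: good_NX (gP P HP).
have hLY : lexp Pset Y = ereal_inf [set (mb Y s)%:E | s in Pset].
  rewrite /lexp /uexp ereal_infEN imgN; congr (- ereal_sup _).
  by apply: eq_imagel => P HP; exact: good_NY (gP P HP).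
have hMX : Mint Pset X = Mset (ereal_inf [set (ma X s)%:E | s in Pset])
                              (ereal_sup [set (ma X s)%:E | s in Pset]).
  by rewrite /Mint hLX hUX.
have hMY : Mint Pset Y = Mset (ereal_inf [set (mb Y s)%:E | s in Pset])
                              (ereal_sup [set (mb Y s)%:E | s in Pset]).
  by rewrite /Mint hLY hUY.
have hcov : [set covariance Q X Y | Q in conv_hull Pset] =
            [set (mc X Y Q - ma X Q * mb Y Q)%:E | Q in conv_hull Pset].
  by apply: eq_imagel => Q HQ; exact: good_cov (gQ Q HQ).
split.
- rewrite /upper_cov hMX hMY hcov -(upper_main S0 Hbd Hh Hmix).
  congr ereal_sup; apply: eq_imagel => m2 _; congr ereal_inf.
  apply: eq_imagel => m1 _; rewrite /uexp; congr ereal_sup.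
  by apply: eq_imagel => P HP; exact: good_aff (gP P HP).
- rewrite /lower_cov hMX hMY hcov -(lower_main S0 Hbd Hh Hmix).
  congr ereal_inf; apply: eq_imagel => m2 _; congr ereal_sup.
  apply: eq_imagel => m1 _; rewrite /uexp; congr (- ereal_sup _).
  by apply: eq_imagel => P HP; exact: good_affN (gP P HP).
Qed.
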